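(* Let $(x_n)_{n\ge0}$ be an infinite path in $\Gamma$ with $\ell(x_n)=n$, let $z$ be nonreal, and let $v_z,u_z:\Gamma\to\mathbb C$ satisfy $v_z(x_0)=1$, $v_z(x_1)=(z-\beta_{x_0})/\lambda_{x_0}$, $u_z(x_0)=0$, $u_z(x_1)=1/\lambda_{x_0}$, and $(Jv_z)(x)=zv_z(x)$, $(Ju_z)(x)=zu_z(x)$ for all $x\in\Gamma\setminus\{x_0\}$. Then for every $n\ge0$, $$v_z(x_n)u_z(x_{n+1})-u_z(x_n)v_z(x_{n+1})=\frac{1}{\lambda_{x_n}}.$$
   Context: Let $\Gamma$ be an infinite connected tree whose vertices are arranged in levels $\ell(x)\in\{0,1,2,\dots\}$: every vertex $x$ is adjacent to exactly one vertex $x'$ with $\ell(x')=\ell(x)+1$; for $\ell(x)\ge 1$ the set $N_x=\{y:\ y'=x\}$ of neighbours of $x$ on level $\ell(x)-1$ is finite and nonempty; $N_x=\emptyset$ if $\ell(x)=0$; there are no other edges. Fix $\lambda_x>0$, $\beta_x\in\mathbb R$. The Jacobi matrix $J$ acts on functions $v:\Gamma\to\mathbb C$ by $(Jv)(x)=\lambda_x v(x')+\beta_x v(x)+\sum_{y\in N_x}\lambda_y v(y)$. *)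

(* Defs.v *)
From Stdlib Require Lists.List.
From HB Require Import structures.
From mathcomp Require Import all_boot all_order all_algebra.
Set Implicit Arguments. Unset Strict Implicit. Unset Printing Implicit Defensive.
Import Order.TTheory GRing.Theory Num.Theory.
Local Open Scope ring_scope.

(* A leveled tree Gamma on vertex type V:
   lev x   = level of x,
   par x   = x' (the unique neighbour on the next level),
   ch x    = duplicate-free list enumerating N_x = {y | par y = x}. *)
Definition leveled_tree (V : Type) (lev : V -> nat) (par : V -> V)
  (ch : V -> seq V) : Prop :=
  (forall x, lev (par x) = (lev x).+1) /\
  (forall x y, Stdlib.Lists.List.In y (ch x) <-> par y = x) /\
  (forall x, Stdlib.Lists.List.NoDup (ch x)) /\
  (forall x, (1 <= lev x)%N -> ch x <> [::]) /\
  (forall x y, exists m n, iter m par x = iter n par y).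

Definition Jac (C : numClosedFieldType) (V : Type) (par : V -> V)
  (ch : V -> seq V) (lam beta : V -> C) (v : V -> C) (x : V) : C :=
  lam x * v (par x) + beta x * v x + \sum_(y <- ch x) lam y * v y.

(* Main.v *)
Require Import Defs.
From HB Require Import structures.
From mathcomp Require Import all_boot all_order all_algebra.
From mathcomp Require Import ring zify.
Import Order.TTheory GRing.Theory Num.Theory.
Local Open Scope ring_scope.

Lemma sum_zero_In (C : numClosedFieldType) (V : Type) (s : seq V) (f : V -> C) :
  (forall w, Stdlib.Lists.List.In w s -> f w = 0) -> \sum_(w <- s) f w = 0.
Proof.
elim: s => [|a s IH] H; first by rewrite big_nil.
rewrite big_cons H /=; last by left.
rewrite add0r IH // => w Hw; apply: H; by right.
Qed.

Lemma sum_single_In (C : numClosedFieldType) (V : Type) (s : seq V) (f : V -> C) a :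
  Stdlib.Lists.List.NoDup s -> Stdlib.Lists.List.In a s ->
  (forall w, Stdlib.Lists.List.In w s -> w <> a -> f w = 0) -> \sum_(w <- s) f w = f a.
Proof.
elim: s => [|b s IH] Hnd Ha H; first by case: Ha.
inversion Hnd as [|b' s' Hb Hnd' [Eb Es]]; subst.
rewrite big_cons.
case: Ha => [Eab|Has].
- subst b. rewrite sum_zero_In ?addr0 // => w Hw.
  apply: H; first by right.
  by move=> E; subst w.
- rewrite H /=; [|by left|by move=> E; subst b].
  rewrite add0r IH // => w Hw; apply: H; by right.
Qed.

Theorem proposition4 (C : numClosedFieldType) (V : Type) (lev : V -> nat)
  (par : V -> V) (ch : V -> seq V) (lam beta : V -> C)
  (Htree : leveled_tree lev par ch)
  (Hlam : forall x, 0 < lam x) (Hbeta : forall x, beta x \is Num.real)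
  (xs : nat -> V) (Hxlev : forall n, lev (xs n) = n)
  (Hxpath : forall n, par (xs n) = xs n.+1)
  (z : C) (Hz : z \notin Num.real) (v u : V -> C)
  (Hv0 : v (xs 0%N) = 1) (Hv1 : v (xs 1%N) = (z - beta (xs 0%N)) / lam (xs 0%N))
  (Hu0 : u (xs 0%N) = 0) (Hu1 : u (xs 1%N) = (lam (xs 0%N))^-1)
  (HJv : forall x, x <> xs 0%N -> Jac par ch lam beta v x = z * v x)
  (HJu : forall x, x <> xs 0%N -> Jac par ch lam beta u x = z * u x) :
  forall n : nat,
    v (xs n) * u (xs n.+1) - u (xs n) * v (xs n.+1) = (lam (xs n))^-1.
Proof.
case: Htree => Hlev [Hch [Hnd [_ _]]].
have lam0 : forall x, lam x != 0 by move=> x; rewrite gt_eqF.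
have key : forall x, x <> xs 0%N ->
  lam x * (v (par x) * u x - u (par x) * v x)
  + \sum_(w <- ch x) lam w * (v w * u x - u w * v x) = 0.
  move=> x hx.
  have Ev := HJv x hx; have Eu := HJu x hx; rewrite /Jac in Ev Eu.
  have -> : \sum_(w <- ch x) lam w * (v w * u x - u w * v x) =
     u x * \sum_(w <- ch x) lam w * v w - v x * \sum_(w <- ch x) lam w * u w.
    rewrite !big_distrr -sumrB; apply: eq_bigr => w _ /=. ring.
  move: Ev Eu.
  set Sv := \sum_(w <- ch x) lam w * v w; set Su := \sum_(w <- ch x) lam w * u w.
  move=> Ev Eu.
  have -> : Sv = z * v x - lam x * v (par x) - beta x * v x by rewrite -Ev; ring.
  have -> : Su = z * u x - lam x * u (par x) - beta x * u x by rewrite -Eu; ring.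
  ring.
have off : forall m y, (lev y <= m)%N -> (forall k, y <> xs k) ->
    v (par y) * u y - u (par y) * v y = 0.
  elim=> [|m IH] y hl hy.
  - have := key y (hy 0%N).
    rewrite sum_zero_In ?addr0.
      by move/eqP; rewrite mulf_eq0 (negbTE (lam0 y)) /= => /eqP.
    move=> w /Hch hw. have := Hlev w; rewrite hw; lia.
  - have := key y (hy 0%N).
    rewrite sum_zero_In ?addr0.
      by move/eqP; rewrite mulf_eq0 (negbTE (lam0 y)) /= => /eqP.
    move=> w /Hch hw.
    have hw' : forall k, w <> xs k.
      move=> k E; apply: (hy k.+1); by rewrite -hw E Hxpath.
    have hlw : (lev w <= m)%N by have := Hlev w; rewrite hw; lia.
    have := IH w hlw hw'; rewrite hw => E.
    apply/eqP; rewrite mulf_eq0 (negbTE (lam0 w)) /=.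
    by apply/eqP; rewrite -[RHS]oppr0 -E; ring.
elim=> [|n IH].
  by rewrite Hv0 Hu0 Hu1; ring.
have hx : xs n.+1 <> xs 0%N by move=> E; have := Hxlev n.+1; rewrite E Hxlev.
have := key (xs n.+1) hx.
rewrite (@sum_single_In _ _ _ _ (xs n)); last first.
- move=> w /Hch hw hne.
  have hw' : forall k, w <> xs k.
    move=> k E; apply: hne; subst w.
    rewrite Hxpath in hw. have := congr1 lev hw; rewrite !Hxlev => [[->]] //.
  have := off _ w (leqnn _) hw'; rewrite hw => E.
  rewrite /=; apply: (@eq_trans _ _ (- lam w * (v (xs n.+1) * u w - u (xs n.+1) * v w))); [ring | by rewrite E mulr0].
- by apply/Hch.
- by [].
rewrite Hxpath => E.
have E2 : lam (xs n.+1) * (v (xs n.+1) * u (xs n.+2) - u (xs n.+1) * v (xs n.+2)) = 1.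
  have E3 : lam (xs n) * (v (xs n) * u (xs n.+1) - u (xs n) * v (xs n.+1)) = 1.
    by rewrite IH mulfV.
  rewrite -E3; apply/eqP; rewrite -subr_eq0; apply/eqP; apply: (@eq_trans _ _ (- (lam (xs n.+1) * (v (xs n.+2) * u (xs n.+1) - u (xs n.+2) * v (xs n.+1)) +
    lam (xs n) * (v (xs n) * u (xs n.+1) - u (xs n) * v (xs n.+1))))); [ring | by rewrite E oppr0].
by apply: (mulfI (lam0 (xs n.+1))); rewrite E2 mulfV.
Qed.
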